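(* Let $\mathbb{X}$ be a topological space with viable base $\Omega_0$, $\iota:X\to\widehat{X}$ the canonical map, and $\mathbb{D}$ a bc-domain with basis $D_0$. The map $\gamma:\widehat{\mathbb{B}}\to\mathbb{B}_{\mathrm{abs}}$, $\gamma(f)=f\circ\iota$, is a bijection with $\gamma\big(\bigsqcup_{i}b_i\chi_{\mathcal{O}_{{\downarrow}W_i}}\big)=\bigsqcup_i b_i\chi_{W_i}$, and for all $f,g\in\widehat{\mathbb{B}}$: $f\ll g$ (in $[\widehat{\mathbb{X}}_{\Omega_0}\to\mathbb{D}]$) if and only if $\gamma(f)\prec\gamma(g)$.
   Context: A viable base of $\mathbb{X}=(X,\tau_{\mathbb{X}})$ is a family $\Omega_0\subseteq\tau_{\mathbb{X}}$ closed under finite unions and finite intersections (so $\emptyset,X\in\Omega_0$) which is a base of $\tau_{\mathbb{X}}$. ${\downarrow}W=\{U\in\Omega_0:U\subseteq W\}$; $\mathrm{Idl}(\Omega_0)$ is the complete lattice of ideals (nonempty, downward closed, directed subsets) of $(\Omega_0,\subseteq)$. $\widehat{\mathbb{X}}_{\Omega_0}$ is the set $\widehat{X}$ of completely prime filters of $\mathrm{Idl}(\Omega_0)$ (nonempty upward closed sets closed under binary meets with $\bigvee A\in F\Rightarrow A\cap F\neq\emptyset$), topologized by open sets $\mathcal{O}_I=\{y:I\in y\}$; $\iota(x)=\{I: x\in\bigcup I\}$. A bc-domain is a continuous dcpo with least element $\bot$ in which bounded subsets have joins; $\ll$ is way-below; $\twoheaduparrow b=\{d:b\ll d\}$. $b\chi_O$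 has value $b$ on $O$ and $\bot$ elsewhere; a family $\{b_i\chi_{O_i}\}_{i\in I}$ is consistent if for every $J\subseteq I$ with $\bigcap_{j\in J}O_j\neq\emptyset$ the $b_j$ ($j\in J$) have an upper bound; joins are pointwise. $\widehat{\mathbb{B}}$ = pointwise joins of finite consistent families $b_i\chi_{\mathcal{O}_{{\downarrow}W_i}}$ with $W_i\in\Omega_0$, $b_i\in D_0$ (functions on $\widehat{X}$). $\mathbb{B}_{\mathrm{abs}}$ = pointwise joins of finite consistent families $b_i\chi_{O_i}$ with $O_i\in\Omega_0$, $b_i\in D_0$ (functions on $X$). The relation $\prec$ on $\mathbb{B}_{\mathrm{abs}}$: $\bigsqcup_{i\in I}b_i\chi_{O_i}\prec h$ iff $O_i\subseteq h^{-1}(\twoheaduparrow b_i)$ for all $i\in I$. *)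

(* Defs.v *)
From HB Require Import structures.
From mathcomp Require Import all_boot all_order.
From mathcomp Require Import boolp classical_sets topology.
From Stdlib Require Import Classical.

Set Implicit Arguments.
Unset Strict Implicit.
Unset Printing Implicit Defensive.

Import Order.TTheory.
Local Open Scope classical_set_scope.

Definition directed_rel (T : Type) (le : T -> T -> Prop) (A : set T) : Prop :=
  (exists a, A a) /\
  (forall a b, A a -> A b -> exists c, A c /\ le a c /\ le b c).

Definition is_lub_in (T : Type) (le : T -> T -> Prop) (S A : set T) (s : T) : Prop :=
  S s /\ (forall a, A a -> le a s) /\
  (forall u, S u -> (forall a, A a -> le a u) -> le s u).

Definition way_below_in (T : Type) (le : T -> T -> Prop) (S : set T) (x y : T) : Prop :=
  forall A : set T, A `<=` S -> directed_rel le A ->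
  forall s, is_lub_in le S A s -> le y s -> exists a, A a /\ le x a.

Section Domain.
Context {d : Order.disp_t} {D : bPOrderType d}.

Definition leD (x y : D) : Prop := (x <= y)%O.

Definition dlub (A : set D) (s : D) : Prop := is_lub_in leD setT A s.

Definition way_below (x y : D) : Prop := way_below_in leD setT x y.

Definition is_dcpo : Prop :=
  forall A : set D, directed_rel leD A -> exists s, dlub A s.

Definition is_basis (D0 : set D) : Prop :=
  forall x : D,
    directed_rel leD [set b | D0 b /\ way_below b x] /\
    dlub [set b | D0 b /\ way_below b x] x.

Definition bounded_complete : Prop :=
  forall A : set D, (exists u, forall a, A a -> leD a u) -> exists s, dlub A s.

(* bc-domain with basis D0 (the least element is \bot of bPOrderType) *)
Definition is_bc_domain (D0 : set D) : Prop :=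
  is_dcpo /\ is_basis D0 /\ bounded_complete.

Definition scott_open (U : set D) : Prop :=
  (forall x y, U x -> leD x y -> U y) /\
  (forall A : set D, directed_rel leD A -> forall s, dlub A s -> U s ->
     exists a, A a /\ U a).

Definition consistent_family (T : Type) (n : nat) (b : 'I_n -> D)
    (O : 'I_n -> set T) : Prop :=
  forall J : set 'I_n, (exists t, forall j, J j -> O j t) ->
    exists u, forall j, J j -> leD (b j) u.

(* f is the pointwise join of the family b_i chi_{O_i} *)
Definition is_step_join (T : Type) (n : nat) (b : 'I_n -> D)
    (O : 'I_n -> set T) (f : T -> D) : Prop :=
  forall t, dlub [set c | exists i, O i t /\ c = b i] (f t).

End Domain.

Definition viable_base (X : topologicalType) (Om : set (set X)) : Prop :=
  (forall U, Om U -> open U) /\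
  Om set0 /\ Om setT /\
  (forall U V, Om U -> Om V -> Om (U `|` V)) /\
  (forall U V, Om U -> Om V -> Om (U `&` V)) /\
  (forall U : set X, open U -> forall x, U x -> exists B, Om B /\ B x /\ B `<=` U).

Definition downset (X : Type) (Om : set (set X)) (W : set X) : set (set X) :=
  [set U | Om U /\ U `<=` W].

Definition is_ideal (X : Type) (Om : set (set X)) (I : set (set X)) : Prop :=
  I `<=` Om /\ (exists U, I U) /\
  (forall U V, I V -> Om U -> U `<=` V -> I U) /\
  (forall U V, I U -> I V -> exists W, I W /\ U `<=` W /\ V `<=` W).

Definition ideal_join (X : Type) (Om : set (set X)) (A : set (set (set X)))
    (J : set (set X)) : Prop :=
  is_ideal Om J /\ (forall I, A I -> I `<=` J) /\
  (forall K, is_ideal Om K -> (forall I, A I -> I `<=` K) -> J `<=` K).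

(* completely prime filters of Idl(Om); the meet of two ideals is their
   intersection *)
Definition is_cpf (X : Type) (Om : set (set X)) (y : set (set (set X))) : Prop :=
  (forall I, y I -> is_ideal Om I) /\
  (exists I, y I) /\
  (forall I J, y I -> is_ideal Om J -> I `<=` J -> y J) /\
  (forall I J, y I -> y J -> y (I `&` J)) /\
  (forall (A : set (set (set X))) J, (forall I, A I -> is_ideal Om I) ->
     ideal_join Om A J -> y J -> exists I, A I /\ y I).

Definition Xhat (X : Type) (Om : set (set X)) :=
  {y : set (set (set X)) | is_cpf Om y}.
Arguments Xhat {X} Om.

Definition Ohat (X : Type) (Om : set (set X)) (I : set (set X)) : set (Xhat Om) :=
  [set y | proj1_sig y I].
Arguments Ohat {X} Om I _.

Definition open_hat (X : Type) (Om : set (set X)) (V : set (Xhat Om)) : Prop :=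
  forall y, V y -> exists I, is_ideal Om I /\ Ohat Om I y /\ Ohat Om I `<=` V.
Arguments open_hat {X} Om V.

Definition iota_set (X : Type) (Om : set (set X)) (x : X) : set (set (set X)) :=
  [set I | is_ideal Om I /\ exists U, I U /\ U x].
Arguments iota_set {X} Om x _.

Lemma iota_cpf (X : topologicalType) (Om : set (set X)) :
  viable_base Om -> forall x, is_cpf Om (iota_set Om x).
Proof.
move=> [_ [H0 [HT [HU [HI _]]]]] x.
have idI : forall I J, is_ideal Om I -> is_ideal Om J -> is_ideal Om (I `&` J).
  move=> I J [I1 [[U0 HU0] [I3 I4]]] [J1 [[V0 HV0] [J3 J4]]].
  split; [by move=> U [/I1]|].
  split; [exists set0; split; [apply: (I3 _ U0)|apply: (J3 _ V0)] => //; by move=> ?|].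
  split; [by move=> U V [HVI HVJ] HO HUV; split; [apply: (I3 _ V)|apply: (J3 _ V)]|].
  move=> U V [HUI HUJ] [HVI HVJ].
  have [W1 [W1I [UW1 VW1]]] := I4 _ _ HUI HVI.
  have [W2 [W2J [UW2 VW2]]] := J4 _ _ HUJ HVJ.
  have HUV : Om (U `|` V) by apply: HU; apply: I1.
  exists (U `|` V); split; [split|split].
  - apply: (I3 _ W1) => //; by move=> z [/UW1|/VW1].
  - apply: (J3 _ W2) => //; by move=> z [/UW2|/VW2].
  - by move=> z Hz; left.
  - by move=> z Hz; right.
split; [by move=> I []|].
split.
  exists Om; split; [split; [by []|split; [by exists set0|split; [by []|]]]|].
    by move=> U V HUo HVo; exists (U `|` V); split; [apply: HU|split=> z Hz; [left|right]].
  by exists setT.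
split.
  move=> I J [HIi [U [HUI HUx]]] HJ HIJ; split => //; exists U; split => //; exact: HIJ.
split.
  move=> I J [HIi [U [HUI HUx]]] [HJi [V [HVJ HVx]]]; split; first exact: idI.
  have [I1 [_ [I3 _]]] := HIi; have [J1 [_ [J3 _]]] := HJi.
  have HUV : Om (U `&` V) by apply: HI; [apply: I1|apply: J1].
  exists (U `&` V); split; last by split.
  split.
  - by apply: (I3 _ U) => // z [].
  - by apply: (J3 _ V) => // z [].
move=> A J HA [HJi [HJub HJl]] [_ [U [HUJ HUx]]].
apply: NNPP => Hno.
pose K : set (set X) := [set V | Om V /\ ~ V x].
have HK : is_ideal Om K.
  split; [by move=> V []|].
  split; [by exists set0; split|].
  split; [by move=> V W [_ HW] HV HVW; split => // /HVW|].
  move=> V W [HVo HVx] [HWo HWx]; exists (V `|` W); split.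
    by split; [apply: HU|case].
  by split=> z Hz; [left|right].
have : J `<=` K.
  apply: HJl => // I HAI V HVI; have [I1 _] := HA _ HAI.
  split; first exact: I1.
  move=> HVx; apply: Hno; exists I; split => //; split; first exact: HA.
  by exists V.
by move=> /(_ U HUJ) [].
Qed.

Definition iota_hat (X : topologicalType) (Om : set (set X)) (HOm : viable_base Om)
    (x : X) : Xhat Om :=
  exist _ (iota_set Om x) (iota_cpf HOm x).

Section Functions.
Context {d : Order.disp_t} {D : bPOrderType d}.

Definition cont_hat (X : Type) (Om : set (set X)) (f : Xhat Om -> D) : Prop :=
  forall U : set D, scott_open U -> open_hat Om (f @^-1` U).

Definition fle (T : Type) (f g : T -> D) : Prop := forall t, leD (f t) (g t).

Definition way_below_fs (X : Type) (Om : set (set X)) (f g : Xhat Om -> D) : Prop :=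
  way_below_in (@fle (Xhat Om)) (@cont_hat X Om) f g.

Definition in_Bhat (X : Type) (Om : set (set X)) (D0 : set D)
    (f : Xhat Om -> D) : Prop :=
  exists n (b : 'I_n -> D) (W : 'I_n -> set X),
    (forall i, Om (W i) /\ D0 (b i)) /\
    consistent_family b (fun i => Ohat Om (downset Om (W i))) /\
    is_step_join b (fun i => Ohat Om (downset Om (W i))) f.

Definition in_Babs (X : Type) (Om : set (set X)) (D0 : set D) (h : X -> D) : Prop :=
  exists n (b : 'I_n -> D) (O : 'I_n -> set X),
    (forall i, Om (O i) /\ D0 (b i)) /\
    consistent_family b O /\ is_step_join b O h.

(* (join_i b_i chi_{O_i}) prec k  iff  O_i <= k^{-1}(upup b_i) for all i *)
Definition prec_abs (X : Type) (Om : set (set X)) (D0 : set D) (h k : X -> D) : Prop :=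
  exists n (b : 'I_n -> D) (O : 'I_n -> set X),
    (forall i, Om (O i) /\ D0 (b i)) /\
    consistent_family b O /\ is_step_join b O h /\
    (forall i, O i `<=` k @^-1` [set e | way_below (b i) e]).

End Functions.

Arguments in_Bhat {d D X} Om D0 f.
Arguments in_Babs {d D X} Om D0 h.
Arguments prec_abs {d D X} Om D0 h k.
Arguments way_below_fs {d D X} Om f g.
Arguments cont_hat {d D X} Om f.

(* Main.v *)
Require Import Defs.
From HB Require Import structures.
From mathcomp Require Import all_boot all_order.
From mathcomp Require Import boolp classical_sets topology.
From Stdlib Require Import Classical.

Set Implicit Arguments.
Unset Strict Implicit.
Unset Printing Implicit Defensive.
Import Order.TTheory.
Local Open Scope classical_set_scope.

Local Open Scope order_scope.

Lemma leD_refl d (D : bPOrderType d) (x : D) : leD x x.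
Proof. exact: lexx. Qed.

Lemma leD_trans d (D : bPOrderType d) (x y z : D) : leD x y -> leD y z -> leD x z.
Proof. exact: le_trans. Qed.

Lemma leD_anti d (D : bPOrderType d) (x y : D) : leD x y -> leD y x -> x = y.
Proof. by move=> h1 h2; apply: le_anti; rewrite /leD in h1 h2; rewrite h1 h2. Qed.

Lemma leD_bot d (D : bPOrderType d) (x : D) : leD \bot x.
Proof. exact: le0x. Qed.

Lemma dlub_unique d (D : bPOrderType d) (A : set D) s t : dlub A s -> dlub A t -> s = t.
Proof.
move=> [_ [Hs1 Hs2]] [_ [Ht1 Ht2]].
apply: leD_anti; [apply: Hs2 => //|apply: Ht2 => //].
Qed.

Lemma dlub_ub d (D : bPOrderType d) (A : set D) s a : dlub A s -> A a -> leD a s.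
Proof. by move=> [_ [H _]] /H. Qed.

Lemma dlub_least d (D : bPOrderType d) (A : set D) s u :
  dlub A s -> (forall a, A a -> leD a u) -> leD s u.
Proof. by move=> [_ [_ H]] Hu; apply: H. Qed.

Lemma wb_le d (D : bPOrderType d) (x y : D) : way_below x y -> leD x y.
Proof.
move=> H.
have Hd : directed_rel leD [set y].
  split; first by exists y.
  by move=> a b -> ->; exists y; split => //; split; apply: leD_refl.
have Hl : is_lub_in leD setT [set y] y.
  split => //; split; first by move=> a ->; apply: leD_refl.
  by move=> u _ Hu; apply: Hu.
by have [a [-> //]] := H [set y] (fun _ _ => I) Hd y Hl (leD_refl y).
Qed.

Lemma wb_le_l d (D : bPOrderType d) (x y z : D) : leD x y -> way_below y z -> way_below x z.
Proof.
move=> Hxy H A HA Hd s Hs Hzs; have [a [Aa Hya]] := H A HA Hd s Hs Hzs.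
by exists a; split => //; apply: leD_trans Hya.
Qed.

Lemma wb_le_r d (D : bPOrderType d) (x y z : D) : way_below x y -> leD y z -> way_below x z.
Proof.
move=> H Hyz A HA Hd s Hs Hzs; exact: (H A HA Hd s Hs (leD_trans Hyz Hzs)).
Qed.

Lemma wb_bot d (D : bPOrderType d) (x : D) : way_below \bot x.
Proof.
move=> A _ [[a Aa] _] s _ _; exists a; split => //; exact: leD_bot.
Qed.

Lemma wb_join d (D : bPOrderType d) (x1 x2 z j : D) :
  way_below x1 z -> way_below x2 z -> dlub [set c | c = x1 \/ c = x2] j ->
  way_below j z.
Proof.
move=> H1 H2 Hj A HA Hd s Hs Hzs.
have [a1 [A1 Ha1]] := H1 A HA Hd s Hs Hzs.
have [a2 [A2 Ha2]] := H2 A HA Hd s Hs Hzs.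
have [c [Ac [Hc1 Hc2]]] := Hd.2 _ _ A1 A2.
exists c; split => //; apply: (dlub_least Hj) => e [->|->].
- exact: leD_trans Hc1.
- exact: leD_trans Hc2.
Qed.

Lemma interpolate d (D : bPOrderType d) (D0 : set D) :
  is_basis D0 -> forall b e, way_below b e ->
  exists c, D0 c /\ way_below b c /\ way_below c e.
Proof.
move=> HB b e Hbe.
pose M := [set c | D0 c /\ exists c', D0 c' /\ way_below c c' /\ way_below c' e].
have HMd : directed_rel leD M.
  have [[[c' [D0c' Hc']] Hd1] _] := HB e.
  split.
    have [[[c [D0c Hc]] _] _] := HB c'.
    by exists c; split => //; exists c'.
  move=> a1 a2 [Da1 [c1 [D1 [Ha1 Hc1]]]] [Da2 [c2 [D2 [Ha2 Hc2]]]].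
  have [c3 [[D3 Hc3] [H13 H23]]] := Hd1 c1 c2 (conj D1 Hc1) (conj D2 Hc2).
  have [[_ Hd3] _] := HB c3.
  have [c [[D0c Hc] [H1 H2]]] := Hd3 a1 a2 (conj Da1 (wb_le_r Ha1 H13))
     (conj Da2 (wb_le_r Ha2 H23)).
  by exists c; split => //; split => //; exists c3.
have HMl : dlub M e.
  split => //; split.
    move=> a [_ [c' [_ [Hac Hce]]]]; apply: leD_trans (wb_le Hce).
    exact: wb_le.
  move=> u _ Hu.
  have [_ He] := HB e; apply: (dlub_least He) => c' [D0c' Hc'].
  have [_ Hc'l] := HB c'; apply: (dlub_least Hc'l) => c [D0c Hc].
  by apply: Hu; split => //; exists c'.
have [c [[D0c [c' [D0c' [Hcc' Hc'e]]]] Hbc]] := Hbe M (fun _ _ => I) HMd e HMl (leD_refl e).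
exists c'; split => //; split => //; exact: wb_le_l Hbc Hcc'.
Qed.

Lemma wb_scott d (D : bPOrderType d) (D0 : set D) :
  is_basis D0 -> forall b : D, scott_open [set e : D | way_below b e].
Proof.
move=> HB b; split.
  by move=> x y /= Hx Hxy; apply: wb_le_r Hxy.
move=> A HA s Hs /= Hbs.
have [c [_ [Hbc Hcs]]] := interpolate HB Hbs.
have [a [Aa Hca]] := Hcs A (fun _ _ => I) HA s Hs (leD_refl s).
by exists a; split => //; apply: wb_le_r Hca.
Qed.

Local Close Scope order_scope.


Definition Sy (X : Type) (Om : set (set X)) (y : Xhat Om) (U : set X) : Prop :=
  proj1_sig y (downset Om U).

Lemma ideal_union (X : topologicalType) (Om : set (set X)) (HOm : viable_base Om)
  I U V : is_ideal Om I -> I U -> I V -> I (U `|` V).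
Proof.
move: HOm => [_ [_ [_ [HU _]]]] [I1 [_ [I3 I4]]] HIU HIV.
have [W [HW [UW VW]]] := I4 _ _ HIU HIV.
apply: (I3 _ W) => //; first by apply: HU; apply: I1.
by move=> z [/UW|/VW].
Qed.

Lemma ideal_set0 (X : topologicalType) (Om : set (set X)) (HOm : viable_base Om)
  I : is_ideal Om I -> I set0.
Proof.
move: HOm => [_ [H0 _]] [_ [[U HU] [I3 _]]].
by apply: (I3 _ U).
Qed.

Lemma downset_ideal (X : topologicalType) (Om : set (set X)) (HOm : viable_base Om)
  W : Om W -> is_ideal Om (downset Om W).
Proof.
move: (HOm) => [_ [H0 [_ [HU _]]]] HW.
split; first by move=> U [].
split; first by exists set0; split.
split; first by move=> U V [_ HV] HU' HUV; split => // z /HUV /HV.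
move=> U V [HUo HUW] [HVo HVW]; exists (U `|` V); split.
  by split; [apply: HU|move=> z [/HUW|/HVW]].
by split=> z Hz; [left|right].
Qed.

Lemma Om_ideal (X : topologicalType) (Om : set (set X)) (HOm : viable_base Om) :
  is_ideal Om Om.
Proof.
move: (HOm) => [_ [H0 [_ [HU _]]]].
split => //; split; first by exists set0.
split => //.
by move=> U V HUo HVo; exists (U `|` V); split; [apply: HU|split=> z Hz; [left|right]].
Qed.

Lemma ideal_cap (X : topologicalType) (Om : set (set X)) (HOm : viable_base Om)
  I J : is_ideal Om I -> is_ideal Om J -> is_ideal Om (I `&` J).
Proof.
move=> HI HJ; move: (HI) (HJ) => [I1 [_ [I3 I4]]] [J1 [_ [J3 J4]]].
split; first by move=> U [/I1].
split; first by exists set0; split; apply: (ideal_set0 HOm).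
split; first by move=> U V [HVI HVJ] HO HUV; split; [apply: (I3 _ V)|apply: (J3 _ V)].
move=> U V [HUI HUJ] [HVI HVJ]; exists (U `|` V); split.
  by split; apply: (ideal_union HOm).
by split => z Hz; [left|right].
Qed.

Lemma cpf_ideal (X : Type) (Om : set (set X)) (y : Xhat Om) I :
  proj1_sig y I -> is_ideal Om I.
Proof. by case: y => yv [H _] /= /H. Qed.

Lemma cpf_up (X : Type) (Om : set (set X)) (y : Xhat Om) I J :
  proj1_sig y I -> is_ideal Om J -> I `<=` J -> proj1_sig y J.
Proof. by case: y => yv [_ [_ [H _]]] /=; apply: H. Qed.

Lemma cpf_cap (X : Type) (Om : set (set X)) (y : Xhat Om) I J :
  proj1_sig y I -> proj1_sig y J -> proj1_sig y (I `&` J).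
Proof. by case: y => yv [_ [_ [_ [H _]]]] /=; apply: H. Qed.

Lemma cpf_prime (X : Type) (Om : set (set X)) (y : Xhat Om)
  (A : set (set (set X))) J : (forall I, A I -> is_ideal Om I) ->
  ideal_join Om A J -> proj1_sig y J -> exists I, A I /\ proj1_sig y I.
Proof. by case: y => yv [_ [_ [_ [_ H]]]] /=; apply: H. Qed.

Lemma Ohat_Om (X : topologicalType) (Om : set (set X)) (HOm : viable_base Om)
  (y : Xhat Om) : proj1_sig y Om.
Proof.
have [I HI] : exists I, proj1_sig y I by move: (proj2_sig y) => [_ [H _]].
apply: (cpf_up HI (Om_ideal HOm)); exact: (cpf_ideal HI).1.
Qed.

Lemma Sy_T (X : topologicalType) (Om : set (set X)) (HOm : viable_base Om)
  (y : Xhat Om) : Sy y setT.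
Proof.
move: (HOm) => [_ [_ [HT _]]].
apply: cpf_up (Ohat_Om HOm y) _ _; first exact: (downset_ideal HOm).
by move=> U HU; split.
Qed.

Lemma Sy_set0 (X : topologicalType) (Om : set (set X)) (HOm : viable_base Om)
  (y : Xhat Om) : ~ Sy y set0.
Proof.
move: (HOm) => [_ [H0 _]] Hy.
have HJ : ideal_join Om set0 (downset Om set0).
  split; first exact: (downset_ideal HOm).
  split => // K HK _ U [HUo HU0].
  have -> : U = set0 by apply/seteqP; split => // z /HU0.
  exact: (ideal_set0 HOm).
by have [I [[] _]] := cpf_prime (A := set0) (fun _ (x : set0 _) => match x with end) HJ Hy.
Qed.

Lemma Sy_up (X : topologicalType) (Om : set (set X)) (HOm : viable_base Om)
  (y : Xhat Om) U V : Om V -> Sy y U -> U `<=` V -> Sy y V.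
Proof.
move=> HV HU HUV; apply: cpf_up HU _ _; first exact: (downset_ideal HOm).
by move=> W [HW HWU]; split => // z /HWU /HUV.
Qed.

Lemma Sy_cap (X : topologicalType) (Om : set (set X)) (HOm : viable_base Om)
  (y : Xhat Om) U V : Om U -> Om V -> Sy y U -> Sy y V -> Sy y (U `&` V).
Proof.
move: (HOm) => [_ [_ [_ [_ [HI _]]]]] HU HV SU SV.
apply: cpf_up (cpf_cap SU SV) _ _; first by apply: (downset_ideal HOm); apply: HI.
by move=> W [[HW HWU] [_ HWV]]; split => // z Hz; split; [apply: HWU|apply: HWV].
Qed.

Lemma Sy_prime (X : topologicalType) (Om : set (set X)) (HOm : viable_base Om)
  (y : Xhat Om) U V : Om U -> Om V -> Sy y (U `|` V) -> Sy y U \/ Sy y V.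
Proof.
move: (HOm) => [_ [_ [_ [HUn _]]]] HU HV S.
have HA : forall I, [set I | I = downset Om U \/ I = downset Om V] I -> is_ideal Om I.
  by move=> I [->|->]; apply: (downset_ideal HOm).
have HJ : ideal_join Om [set I | I = downset Om U \/ I = downset Om V] (downset Om (U `|` V)).
  split; first by apply: (downset_ideal HOm); apply: HUn.
  split.
    move=> I [->|->] W [HW HWs]; split => // z /HWs; by [left|right].
  move=> K HK Hsub W [HW HWs].
  have KU : K U by apply: (Hsub (downset Om U)); [left|split].
  have KV : K V by apply: (Hsub (downset Om V)); [right|split].
  have [_ [_ [K3 _]]] := HK.
  apply: (K3 _ (U `|` V)) => //; exact: (ideal_union HOm).
have [I [[->|->] HI]] := cpf_prime HA HJ S.
- by left.
- by right.
Qed.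

Lemma Sy_iota (X : topologicalType) (Om : set (set X)) (HOm : viable_base Om)
  U x : Om U -> (Sy (iota_hat HOm x) U <-> U x).
Proof.
move=> HU; rewrite /Sy /=; split.
  by move=> [_ [V [[_ HVU] HVx]]]; apply: HVU.
by move=> Hx; split; [exact: (downset_ideal HOm)|exists U; split => //; split].
Qed.

Lemma cpf_Sy (X : topologicalType) (Om : set (set X)) (HOm : viable_base Om)
  (y : Xhat Om) I : proj1_sig y I -> exists U, I U /\ Sy y U.
Proof.
move=> HyI; have HI := cpf_ideal HyI; move: (HI) => [I1 [_ [I3 _]]].
have HA : forall J, [set J | exists U, I U /\ J = downset Om U] J -> is_ideal Om J.
  by move=> J [U [IU ->]]; apply: (downset_ideal HOm); apply: I1.
have HJ : ideal_join Om [set J | exists U, I U /\ J = downset Om U] I.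
  split => //; split.
    by move=> J [U [IU ->]] W [HW HWU]; apply: (I3 _ U).
  move=> K HK Hsub W HW; apply: (Hsub (downset Om W)).
    by exists W.
  by split => //; apply: I1.
have [J [[U [IU ->]] HJy]] := cpf_prime HA HJ HyI.
by exists U.
Qed.

Lemma Sy_ideal (X : topologicalType) (Om : set (set X)) (HOm : viable_base Om)
  (y : Xhat Om) I U : is_ideal Om I -> I U -> Sy y U -> proj1_sig y I.
Proof.
move=> HI IU SU; apply: (cpf_up SU HI).
move: (HI) => [_ [_ [I3 _]]] W [HW HWU]; exact: (I3 _ U).
Qed.


Lemma agree (X : topologicalType) (Om : set (set X)) (HOm : viable_base Om)
  (y : Xhat Om) n (V : 'I_n -> set X) : (forall j, Om (V j)) ->
  forall W, Om W -> Sy y W -> exists x, W x /\ forall j, V j x <-> Sy y (V j).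
Proof.
move=> HV W HW SW.
move: (HOm) => [_ [H0 [_ [HUn [HIn _]]]]].
pose Is (s : seq 'I_n) := [set z | W z /\ forall j, j \in s -> Sy y (V j) -> V j z].
pose Us (s : seq 'I_n) := [set z | exists j, j \in s /\ ~ Sy y (V j) /\ V j z].
have key : forall s, Om (Is s) /\ Sy y (Is s) /\ Om (Us s) /\ ~ Sy y (Us s).
  elim=> [|j s [IH1 [IH2 [IH3 IH4]]]].
    have -> : Is [::] = W by apply/seteqP; split => [z [] //|z Wz]; split.
    have -> : Us [::] = set0 by apply/seteqP; split => // z [j []].
    by split => //; split => //; split => //; apply: (Sy_set0 HOm).
  case: (classic (Sy y (V j))) => Hj.
    have -> : Is (j :: s) = Is s `&` V j.
      apply/seteqP; split.
        move=> z [Wz Hz]; split; last by apply: Hz => //; rewrite in_cons eqxx.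
        by split => // j' Hj'; apply: Hz; rewrite in_cons Hj' orbT.
      move=> z [[Wz Hz] Vz]; split => // j'; rewrite in_cons => /orP [/eqP ->|] //.
      exact: Hz.
    have -> : Us (j :: s) = Us s.
      apply/seteqP; split.
        move=> z [j' [+ [Nj' Vz]]]; rewrite in_cons => /orP [/eqP Ej|Hs].
          by rewrite Ej in Nj'.
        by exists j'.
      by move=> z [j' [Hs [Nj' Vz]]]; exists j'; rewrite in_cons Hs orbT.
    split; first by apply: HIn.
    split; first by apply: (Sy_cap HOm).
    by [].
  have -> : Is (j :: s) = Is s.
    apply/seteqP; split.
      by move=> z [Wz Hz]; split => // j' Hj'; apply: Hz; rewrite in_cons Hj' orbT.
    move=> z [Wz Hz]; split => // j'; rewrite in_cons => /orP [/eqP ->|] //.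
    exact: Hz.
  have -> : Us (j :: s) = Us s `|` V j.
    apply/seteqP; split.
      move=> z [j' [+ [Nj' Vz]]]; rewrite in_cons => /orP [/eqP Ej|Hs].
        by right; rewrite -Ej.
      by left; exists j'.
    move=> z [[j' [Hs [Nj' Vz]]]|Vz].
      by exists j'; rewrite in_cons Hs orbT.
    by exists j; rewrite in_cons eqxx.
  split => //; split => //; split; first by apply: HUn.
  by case/(Sy_prime HOm IH3 (HV j)).
have [K1 [K2 [K3 K4]]] := key (enum 'I_n).
have Hin : forall j : 'I_n, j \in enum 'I_n by move=> j; rewrite mem_enum.
have [z [Iz NUz]] : exists z, Is (enum 'I_n) z /\ ~ Us (enum 'I_n) z.
  apply: NNPP => Hn; apply: K4; apply: (Sy_up HOm K3 K2) => z Iz.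
  by apply: NNPP => NU; apply: Hn; exists z.
exists z; split; first by case: Iz.
move=> j; split.
  move=> Vz; apply: NNPP => NS; apply: NUz; exists j; split => //.
by move=> Sj; case: Iz => _; apply.
Qed.

Lemma pft (X : topologicalType) (Om : set (set X)) (HOm : viable_base Om)
  K W : is_ideal Om K -> Om W -> ~ K W ->
  exists y : Xhat Om, Sy y W /\ (forall U, Sy y U -> ~ K U).
Proof.
move=> HK HW NKW.
move: (HOm) => [_ [H0 [_ [HUn [HIn _]]]]].
move: (HK) => [K1 [_ [K3 _]]].
pose P (F : set (set X)) := F `<=` Om /\
  (forall U V, F U -> Om V -> U `<=` V -> F V) /\
  (forall U V, F U -> F V -> F (U `&` V)) /\
  (forall U, F U -> ~ K U) /\ (forall U, F U -> F W).
have [A [[A1 [A2 [A3 [A4 A5]]]] Amax]] : exists A, P A /\ forall B, A `<` B -> ~ P B.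
  apply: Zorn_bigcup => F FP Ftot; split.
    by move=> U [G FG GU]; have [+ _] := FP G FG; apply.
  split.
    move=> U V [G FG GU] HV UV; exists G => //.
    by have [_ [H _]] := FP G FG; exact: (H U).
  split.
    move=> U V [G FG GU] [G' FG' G'V].
    case: (Ftot G G' FG FG') => [GG'|G'G].
      exists G' => //; have [_ [_ [+ _]]] := FP G' FG'; apply => //; exact: GG'.
    exists G => //; have [_ [_ [+ _]]] := FP G FG; apply => //; exact: G'G.
  split.
    by move=> U [G FG GU]; have [_ [_ [_ [+ _]]]] := FP G FG; apply.
  move=> U [G FG GU]; exists G => //.
  by have [_ [_ [_ [_ H]]]] := FP G FG; exact: (H U).
have AW : A W.
  apply: NNPP => NAW.
  have NA : forall U, ~ A U by move=> U /A5.
  apply: (Amax [set V | Om V /\ W `<=` V]).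
    by split; [move=> U /NA []|move=> /(_ W) H; apply: NAW; apply: H; split].
  split; first by move=> U [].
  split; first by move=> U V [_ WU] HV UV; split => // z /WU /UV.
  split; first by move=> U V [HU WU] [HV WV]; split; [apply: HIn|move=> z Hz; split; [apply: WU|apply: WV]].
  split; last by move=> U _; split.
  by move=> U [HU WU] KU; apply: NKW; apply: (K3 _ U).
have NA0 : ~ A set0 by move=> /A4; apply; apply: (ideal_set0 HOm).
have Aprime : forall U V, Om U -> Om V -> A (U `|` V) -> A U \/ A V.
  move=> U V HU HV AUV; apply: NNPP => Hn.
  have NAU : ~ A U by move=> H; apply: Hn; left.
  have NAV : ~ A V by move=> H; apply: Hn; right.
  have ext : forall U0, Om U0 -> ~ A U0 -> exists Z, K Z /\ exists s, A s /\ s `&` U0 `<=` Z.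
    move=> U0 HU0 NAU0.
    pose AU := [set Z | Om Z /\ exists s, A s /\ s `&` U0 `<=` Z].
    apply: NNPP => Hn'; apply: (Amax AU).
      split.
        by move=> Z AZ; split; [apply: A1|exists Z; split => // z []].
      move=> /(_ U0) H; apply: NAU0; apply: H; split => //.
      by exists W; split => // z [].
    split; first by move=> Z [].
    split.
      move=> Z Z' [HZ [s [As sZ]]] HZ' ZZ'; split => //; exists s; split => //.
      by move=> z /sZ /ZZ'.
    split.
      move=> Z Z' [HZ [s [As sZ]]] [HZ' [s' [As' sZ']]]; split; first by apply: HIn.
      exists (s `&` s'); split; first by apply: A3.
      by move=> z [[sz s'z] Uz]; split; [apply: sZ|apply: sZ'].
    split.
      move=> Z AUZ KZ; apply: Hn'; exists Z; split => //; by case: AUZ.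
    by move=> Z _; split => //; exists W; split => // z [].
  have [Z1 [KZ1 [s1 [As1 s1Z1]]]] := ext U HU NAU.
  have [Z2 [KZ2 [s2 [As2 s2Z2]]]] := ext V HV NAV.
  have AT : A ((s1 `&` s2) `&` (U `|` V)) := A3 _ _ (A3 _ _ As1 As2) AUV.
  apply: (A4 _ AT); apply: (K3 _ (Z1 `|` Z2)).
  - exact: (ideal_union HOm).
  - exact: A1.
  - move=> z [[z1 z2] [Uz|Vz]]; [left; apply: s1Z1|right; apply: s2Z2]; by split.
pose yv := [set I : set (set X) | is_ideal Om I /\ exists U, I U /\ A U].
have Hcpf : is_cpf Om yv.
  split; first by move=> I [].
  split; first by exists Om; split; [exact: (Om_ideal HOm)|exists W].
  split; first by move=> I J [_ [U [IU AU]]] HJ IJ; split => //; exists U; split => //; apply: IJ.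
  split.
    move=> I J [HI [U [IU AU]]] [HJ [V [JV AV]]]; split; first exact: (ideal_cap HOm).
    exists (U `&` V); split; last by apply: A3.
    have HUV : Om (U `&` V) by apply: A1; apply: A3.
    move: HI HJ => [_ [_ [I3 _]]] [_ [_ [J3 _]]].
    by split; [apply: (I3 _ U)|apply: (J3 _ V)] => // z [].
  move=> A' J HA' [HJ [_ HJl]] [_ [U [JU AU]]].
  apply: NNPP => Hn.
  pose K' := [set V | Om V /\ ~ A V].
  have HK' : is_ideal Om K'.
    split; first by move=> V [].
    split; first by exists set0.
    split; first by move=> V V' [HV' NV] HV VV'; split => // AV; apply: NV; exact: (A2 _ _ AV HV' VV').
    move=> V1 V2 [H1 N1] [H2 N2]; exists (V1 `|` V2); split.
      split; first by apply: HUn.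
      by case/(Aprime _ _ H1 H2).
    by split => z Hz; [left|right].
  have : J `<=` K'.
    apply: HJl => // I A'I V IV; split; first by have [+ _] := HA' I A'I; apply.
    move=> AV; apply: Hn; exists I; split => //; split; first exact: HA'.
    by exists V.
  by move=> /(_ U JU) [].
exists (exist _ yv Hcpf); split.
  rewrite /Sy /=; split; first exact: (downset_ideal HOm).
  by exists W; split => //; split.
move=> U [_ [V [[HV VU] AV]]] KU.
apply: (A4 U) => //; apply: (A2 _ _ AV) => //; exact: K1.
Qed.


Lemma inter_Sy (X : topologicalType) (Om : set (set X)) (HOm : viable_base Om)
  (y : Xhat Om) n (V : 'I_n -> set X) : (forall j, Om (V j)) ->
  exists Z, Om Z /\ Sy y Z /\ forall j, Sy y (V j) -> Z `<=` V j.
Proof.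
move=> HV; move: (HOm) => [_ [_ [HT [_ [HIn _]]]]].
have key : forall s : seq 'I_n, exists Z, Om Z /\ Sy y Z /\
    forall j, j \in s -> Sy y (V j) -> Z `<=` V j.
  elim=> [|j s [Z [HZ [SZ IH]]]].
    by exists setT; split => //; split => //; apply: (Sy_T HOm).
  case: (classic (Sy y (V j))) => Hj.
    exists (Z `&` V j); split; first by apply: HIn.
    split; first by apply: (Sy_cap HOm).
    move=> j'; rewrite in_cons => /orP [/eqP -> _ z []//|Hs Sj z [Zz _]].
    exact: (IH j' Hs Sj).
  exists Z; split => //; split => // j'; rewrite in_cons => /orP [/eqP -> //|].
  exact: IH.
have [Z [HZ [SZ H]]] := key (enum 'I_n).
exists Z; split => //; split => // j; apply: H; by rewrite mem_enum.
Qed.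

Definition loc d (D : bPOrderType d) (X : Type) (Om : set (set X)) (f : Xhat Om -> D) :=
  forall z, exists I, is_ideal Om I /\ proj1_sig z I /\
    forall w, proj1_sig w I -> leD (f z) (f w).

Lemma loc_cont d (D : bPOrderType d) (X : Type) (Om : set (set X)) (f : Xhat Om -> D) :
  loc f -> cont_hat Om f.
Proof.
move=> Hl U [Uup _] y /= Uy; have [I [HI [Iy Hw]]] := Hl y.
exists I; split => //; split => // w Iw /=; apply: Uup Uy _; exact: Hw.
Qed.

Lemma step_loc d (D : bPOrderType d) (X : topologicalType) (Om : set (set X))
  (HOm : viable_base Om) n (b : 'I_n -> D) (W : 'I_n -> set X) (f : Xhat Om -> D) :
  (forall i, Om (W i)) -> is_step_join b (fun i => Ohat Om (downset Om (W i))) f -> loc f.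
Proof.
move=> HW Hs z; have [Z [HZ [SZ HZW]]] := inter_Sy HOm z HW.
exists (downset Om Z); split; first exact: (downset_ideal HOm).
split => // w Sw; apply: (dlub_least (Hs z)) => c [i [Si ->]].
apply: (dlub_ub (Hs w)); exists i; split => //.
exact: (Sy_up HOm (HW i) Sw (HZW i Si)).
Qed.

Lemma step_iota d (D : bPOrderType d) (X : topologicalType) (Om : set (set X))
  (HOm : viable_base Om) n (b : 'I_n -> D) (W : 'I_n -> set X) (f : Xhat Om -> D) x :
  (forall i, Om (W i)) -> is_step_join b (fun i => Ohat Om (downset Om (W i))) f ->
  dlub [set c | exists i, W i x /\ c = b i] (f (iota_hat HOm x)).
Proof.
move=> HW Hs.
have -> : [set c | exists i, W i x /\ c = b i] =
          [set c | exists i, Ohat Om (downset Om (W i)) (iota_hat HOm x) /\ c = b i].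
  apply/seteqP; split => c [i [Hi ->]]; exists i; split => //.
    by apply/(Sy_iota HOm x (HW i)).
  by apply/(Sy_iota HOm x (HW i)).
exact: Hs.
Qed.

Lemma step_le_iota d (D : bPOrderType d) (X : topologicalType) (Om : set (set X))
  (HOm : viable_base Om) n (b : 'I_n -> D) (W : 'I_n -> set X) (f : Xhat Om -> D) x y :
  (forall i, Om (W i)) -> is_step_join b (fun i => Ohat Om (downset Om (W i))) f ->
  (forall i, W i x -> Sy y (W i)) -> leD (f (iota_hat HOm x)) (f y).
Proof.
move=> HW Hs Hxy; apply: (dlub_least (step_iota HOm x HW Hs)) => c [i [Hi ->]].
apply: (dlub_ub (Hs y)); exists i; split => //; exact: Hxy.
Qed.

Lemma gamma_le d (D : bPOrderType d) (X : topologicalType) (Om : set (set X))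
  (HOm : viable_base Om) n (b : 'I_n -> D) (W : 'I_n -> set X) (f : Xhat Om -> D)
  m (c : 'I_m -> D) (V : 'I_m -> set X) (g : Xhat Om -> D) :
  (forall i, Om (W i)) -> is_step_join b (fun i => Ohat Om (downset Om (W i))) f ->
  (forall i, Om (V i)) -> is_step_join c (fun i => Ohat Om (downset Om (V i))) g ->
  (forall x, f (iota_hat HOm x) = g (iota_hat HOm x)) -> forall y, leD (f y) (g y).
Proof.
move=> HW Hf HV Hg E y; apply: (dlub_least (Hf y)) => e [i [Si ->]].
have [x [Wx Hx]] := agree HOm HV (HW i) Si.
apply: (leD_trans (y := f (iota_hat HOm x))).
  apply: (dlub_ub (step_iota HOm x HW Hf)); by exists i.
rewrite E; apply: (step_le_iota HOm HV Hg) => j /Hx //.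
Qed.


Lemma surj_ex d (D : bPOrderType d) (X : topologicalType) (Om : set (set X))
  (HOm : viable_base Om) (D0 : set D) (HD : is_bc_domain D0)
  n (b : 'I_n -> D) (O : 'I_n -> set X) (h : X -> D) :
  (forall i, Om (O i)) -> consistent_family b O -> is_step_join b O h ->
  exists f : Xhat Om -> D,
    consistent_family b (fun i => Ohat Om (downset Om (O i))) /\
    is_step_join b (fun i => Ohat Om (downset Om (O i))) f /\
    forall x, f (iota_hat HOm x) = h x.
Proof.
move=> HO Hc Hs; have [Hdc [Hbs Hbc]] := HD.
have [_ [_ [HT _]]] := HOm.
have ex : forall y : Xhat Om, exists s, dlub [set c | exists i, Sy y (O i) /\ c = b i] s.
  move=> y; apply: Hbc.
  have [x [_ Hx]] := agree HOm HO HT (Sy_T HOm y).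
  have [u Hu] := Hc [set j | Sy y (O j)] (ex_intro _ x (fun j Sj => proj2 (Hx j) Sj)).
  by exists u => a [i [Si ->]]; apply: Hu.
pose f y := proj1_sig (cid (ex y)).
have Hf : is_step_join b (fun i => Ohat Om (downset Om (O i))) f.
  by move=> y; rewrite /f; case: cid.
exists f; split.
  move=> J [y Hy]; exists (f y) => j Jj; apply: (dlub_ub (Hf y)).
  by exists j; split => //; apply: Hy.
split => // x; apply: dlub_unique (step_iota HOm x HO Hf) (Hs x).
Qed.

Lemma wb_core d (D : bPOrderType d) (X : topologicalType) (Om : set (set X))
  (HOm : viable_base Om) (D0 : set D) (HD : is_bc_domain D0)
  n (b : 'I_n -> D) (O : 'I_n -> set X) (f : Xhat Om -> D)
  m (c : 'I_m -> D) (V : 'I_m -> set X) (g : Xhat Om -> D) :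
  (forall i, Om (O i)) -> is_step_join b (fun i => Ohat Om (downset Om (O i))) f ->
  (forall i, Om (V i)) -> is_step_join c (fun i => Ohat Om (downset Om (V i))) g ->
  (forall i x, O i x -> way_below (b i) (g (iota_hat HOm x))) ->
  way_below_fs Om f g.
Proof.
move=> HO Hf HV Hg Hwb A HA Hd s Hs Hgs.
have [Hdcpo [Hbasis _]] := HD.
have [_ [H0 [_ [HUn _]]]] := HOm.
have [[a0 Aa0] Hd2] := Hd.
have dirA : forall y, directed_rel leD [set e | exists a, A a /\ e = a y].
  move=> y; split; first by exists (a0 y); exists a0.
  move=> _ _ [a1 [A1 ->]] [a2 [A2 ->]]; have [a3 [A3 [H13 H23]]] := Hd2 _ _ A1 A2.
  by exists (a3 y); split; [exists a3|split; [apply: H13|apply: H23]].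
have ex : forall y, exists t, dlub [set e | exists a, A a /\ e = a y] t.
  by move=> y; apply: Hdcpo.
pose P y := proj1_sig (cid (ex y)).
have HP : forall y, dlub [set e | exists a, A a /\ e = a y] (P y).
  by move=> y; rewrite /P; case: cid.
have Pcont : cont_hat Om P.
  move=> U [Uup Udir] y /= Uy.
  have [_ [[a [Aa ->]] Uay]] := Udir _ (dirA y) _ (HP y) Uy.
  have [I [HI [Iy HIsub]]] := HA a Aa U (conj Uup Udir) y Uay.
  exists I; split => //; split => // w Iw /=.
  apply: Uup (HIsub w Iw) _; apply: (dlub_ub (HP w)); by exists a.
have sP : forall y, leD (s y) (P y).
  have [_ [_ Hl]] := Hs; apply: Hl => // a Aa y.
  by apply: (dlub_ub (HP y)); exists a.
have per : forall i, exists a, A a /\ forall y, Sy y (O i) -> leD (b i) (a y).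
  move=> i.
  pose K := [set U | Om U /\ exists a, A a /\ forall y, Sy y U -> leD (b i) (a y)].
  have HK : is_ideal Om K.
    split; first by move=> U [].
    split; first by exists set0; split => //; exists a0; split => // y /(Sy_set0 HOm).
    split.
      move=> U U' [HU' [a [Aa Ha]]] HU UU'; split => //; exists a; split => // y Sy'.
      apply: Ha; exact: (Sy_up HOm HU' Sy' UU').
    move=> U1 U2 [H1 [a1 [A1 Ha1]]] [H2 [a2 [A2 Ha2]]].
    have [a3 [A3 [H13 H23]]] := Hd2 _ _ A1 A2.
    exists (U1 `|` U2); split; last by split => z Hz; [left|right].
    split; first by apply: HUn.
    exists a3; split => // y /(Sy_prime HOm H1 H2) [S1|S2].
      exact: leD_trans (Ha1 y S1) (H13 y).
    exact: leD_trans (Ha2 y S2) (H23 y).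
  have : K (O i).
    apply: NNPP => NK.
    have [y0 [Sy0 Hy0]] := pft HOm HK (HO i) NK.
    have [x [Ox Hx]] := agree HOm HV (HO i) Sy0.
    have Hwy0 : way_below (b i) (P y0).
      apply: wb_le_r (Hwb i x Ox) _.
      apply: leD_trans (sP y0); apply: leD_trans (Hgs y0).
      by apply: (step_le_iota HOm HV Hg) => j /Hx.
    have [_ Hsc] := wb_scott Hbasis (b i).
    have [_ [[a [Aa ->]] Hwa]] := Hsc _ (dirA y0) _ (HP y0) Hwy0.
    have [I [HI [Iy HIsub]]] := HA a Aa _ (wb_scott Hbasis (b i)) y0 Hwa.
    have [U [IU SU]] := cpf_Sy HOm Iy.
    apply: (Hy0 U SU); split; first by have [+ _] := HI; apply.
    exists a; split => // w Sw; apply: wb_le.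
    exact: (HIsub w (Sy_ideal HOm HI IU Sw)).
  by move=> [_ [a [Aa Ha]]]; exists a.
have [ai Hai] := choice per.
have bnd : forall l : seq 'I_n, exists a, A a /\ forall i, i \in l -> fle (ai i) a.
  elim=> [|j l [a [Aa Ha]]]; first by exists a0.
  have [a3 [A3 [H13 H23]]] := Hd2 _ _ Aa (proj1 (Hai j)).
  exists a3; split => // i; rewrite in_cons => /orP [/eqP -> //|Hl y].
  exact: leD_trans (Ha i Hl y) (H13 y).
have [a [Aa Ha]] := bnd (enum 'I_n).
exists a; split => // y; apply: (dlub_least (Hf y)) => e [i [Si ->]].
apply: leD_trans ((proj2 (Hai i)) y Si) _; apply: Ha; by rewrite mem_enum.
Qed.

Local Open Scope order_scope.

Lemma wb_forward d (D : bPOrderType d) (X : topologicalType) (Om : set (set X))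
  (HOm : viable_base Om) (D0 : set D) (HD : is_bc_domain D0)
  (f : Xhat Om -> D)
  m (c : 'I_m -> D) (V : 'I_m -> set X) (g : Xhat Om -> D) :
  (forall i, Om (V i)) -> is_step_join c (fun i => Ohat Om (downset Om (V i))) g ->
  way_below_fs Om f g -> forall y, way_below (f y) (g y).
Proof.
move=> HV Hg Hwb y.
have [Hdcpo [Hbasis Hbc]] := HD.
pose H := [set h : Xhat Om -> D | loc h /\ forall z, way_below (h z) (g z)].
have Hsub : H `<=` cont_hat Om by move=> h [Hl _]; apply: loc_cont.
have gloc : loc g := step_loc HOm HV Hg.
have Hdir : directed_rel (@fle _ _ (Xhat Om)) H.
  split.
    exists (fun _ => \bot); split; last by move=> z; apply: wb_bot.
    move=> z; exists Om; split; first exact: (Om_ideal HOm).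
    by split; [exact: (Ohat_Om HOm)|move=> w _; apply: leD_refl].
  move=> h1 h2 [l1 w1] [l2 w2].
  have ex : forall z, exists t, dlub [set e | e = h1 z \/ e = h2 z] t.
    move=> z; apply: Hbc; exists (g z) => e [->|->]; exact: wb_le.
  pose h3 z := proj1_sig (cid (ex z)).
  have H3 : forall z, dlub [set e | e = h1 z \/ e = h2 z] (h3 z).
    by move=> z; rewrite /h3; case: cid.
  exists h3; split; last by split => z; apply: (dlub_ub (H3 z)); [left|right].
  split; last by move=> z; apply: wb_join (w1 z) (w2 z) (H3 z).
  move=> z; have [I1 [HI1 [Iz1 P1]]] := l1 z; have [I2 [HI2 [Iz2 P2]]] := l2 z.
  exists (I1 `&` I2); split; first exact: (ideal_cap HOm).
  split; first exact: cpf_cap.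
  move=> w Iw; apply: (dlub_least (H3 z)) => e [->|->].
    apply: leD_trans (P1 w (cpf_up Iw HI1 (fun _ p => proj1 p))) _.
    by apply: (dlub_ub (H3 w)); left.
  apply: leD_trans (P2 w (cpf_up Iw HI2 (fun _ p => proj2 p))) _.
  by apply: (dlub_ub (H3 w)); right.
have Hlub : is_lub_in (@fle _ _ (Xhat Om)) (cont_hat Om) H g.
  split; first exact: loc_cont.
  split; first by move=> h [_ Hw] z; apply: wb_le.
  move=> u _ Hu z.
  have [_ Hb] := Hbasis (g z); apply: (dlub_least Hb) => e [D0e Heg].
  have [I [HI [Iz HIg]]] := gloc z.
  pose s (w : Xhat Om) : D := if `[< proj1_sig w I >] then e else \bot.
  have sH : H s.
    split.
      move=> w; rewrite /s; case: asboolP => Hw.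
        exists I; split => //; split => // w' Hw'.
        by case: asboolP => // _; apply: leD_refl.
      exists Om; split; first exact: (Om_ideal HOm).
      by split; [exact: (Ohat_Om HOm)|move=> w' _; apply: leD_bot].
    move=> w; rewrite /s; case: asboolP => Hw; last exact: wb_bot.
    exact: wb_le_r Heg (HIg w Hw).
  have := Hu s sH z; rewrite /s; case: asboolP => //.
have [h [[hl hw] Hfh]] := Hwb H Hsub Hdir g Hlub (fun t => leD_refl _).
exact: wb_le_l (Hfh y) (hw y).
Qed.

Local Close Scope order_scope.


Lemma part4 d (D : bPOrderType d) (X : topologicalType) (Om : set (set X))
  (HOm : viable_base Om) n (b : 'I_n -> D) (W : 'I_n -> set X) (f : Xhat Om -> D) :
  (forall i, Om (W i)) ->
  consistent_family b (fun i => Ohat Om (downset Om (W i))) ->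
  is_step_join b (fun i => Ohat Om (downset Om (W i))) f ->
  consistent_family b W /\ is_step_join b W (f \o iota_hat HOm).
Proof.
move=> HW Hc Hs; split; last by move=> x; exact: (step_iota HOm x HW Hs).
move=> J [t Ht]; apply: Hc; exists (iota_hat HOm t) => j Jj.
by apply/(Sy_iota HOm t (HW j)); apply: Ht.
Qed.

Theorem mainTheorem18 (X : topologicalType) (Om : set (set X))
    (HOm : viable_base Om)
    (d : Order.disp_t) (D : bPOrderType d) (D0 : set D)
    (HD : is_bc_domain D0) :
  let gamma := fun f : Xhat Om -> D => f \o iota_hat HOm in
  (* gamma maps B^ into B_abs *)
  (forall f, in_Bhat Om D0 f -> in_Babs Om D0 (gamma f)) /\
  (* gamma is injective on B^ *)
  (forall f g, in_Bhat Om D0 f -> in_Bhat Om D0 g -> gamma f = gamma g -> f = g) /\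
  (* gamma is onto B_abs *)
  (forall h, in_Babs Om D0 h -> exists f, in_Bhat Om D0 f /\ gamma f = h) /\
  (* gamma (join_i b_i chi_{O_{down W_i}}) = join_i b_i chi_{W_i} *)
  (forall n (b : 'I_n -> D) (W : 'I_n -> set X) (f : Xhat Om -> D),
     (forall i, Om (W i) /\ D0 (b i)) ->
     consistent_family b (fun i => Ohat Om (downset Om (W i))) ->
     is_step_join b (fun i => Ohat Om (downset Om (W i))) f ->
     consistent_family b W /\ is_step_join b W (gamma f)) /\
  (* way-below in [X^ -> D] corresponds to prec *)
  (forall f g, in_Bhat Om D0 f -> in_Bhat Om D0 g ->
     (way_below_fs Om f g <-> prec_abs Om D0 (gamma f) (gamma g))).
Proof.
move=> gamma.
have P4 : forall n (b : 'I_n -> D) (W : 'I_n -> set X) (f : Xhat Om -> D),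
     (forall i, Om (W i) /\ D0 (b i)) ->
     consistent_family b (fun i => Ohat Om (downset Om (W i))) ->
     is_step_join b (fun i => Ohat Om (downset Om (W i))) f ->
     consistent_family b W /\ is_step_join b W (gamma f).
  by move=> n b W f Hi; apply: part4 => i; case: (Hi i).
have Inj : forall f g, in_Bhat Om D0 f -> in_Bhat Om D0 g ->
    (forall x, f (iota_hat HOm x) = g (iota_hat HOm x)) -> f = g.
  move=> f g [n [b [W [Hi [Hc Hs]]]]] [m [c [V [Hi' [Hc' Hs']]]]] E.
  have HW : forall i, Om (W i) by move=> i; case: (Hi i).
  have HV : forall i, Om (V i) by move=> i; case: (Hi' i).
  apply: funext => y; apply: leD_anti.
    exact: (gamma_le HW Hs HV Hs' E y).
  by apply: (gamma_le HV Hs' HW Hs) => x; rewrite E.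
split.
  move=> f [n [b [W [Hi [Hc Hs]]]]]; exists n, b, W; split => //.
  exact: P4.
split.
  move=> f g Hf Hg E; apply: Inj => // x.
  by have := congr1 (fun k => k x) E.
split.
  move=> h [n [b [O [Hi [Hc Hs]]]]].
  have HO : forall i, Om (O i) by move=> i; case: (Hi i).
  have [f [Hc' [Hs' E]]] := surj_ex HOm HD HO Hc Hs.
  exists f; split; first by exists n, b, O.
  by apply: funext => x; rewrite /gamma /= E.
split => //.
move=> f g Hf Hg; move: (Hf) (Hg) => [n [b [W [Hi [Hc Hs]]]]] [m [c [V [Hi' [Hc' Hs']]]]].
have HW : forall i, Om (W i) by move=> i; case: (Hi i).
have HV : forall i, Om (V i) by move=> i; case: (Hi' i).
split.
  move=> Hwb; exists n, b, W; split => //.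
  have [Hc2 Hs2] := P4 n b W f Hi Hc Hs.
  split => //; split => // i x /= Wx.
  apply: (wb_le_l (y := f (iota_hat HOm x))).
    apply: (dlub_ub (step_iota HOm x HW Hs)); by exists i.
  exact: (wb_forward HOm HD HV Hs' Hwb).
move=> [n' [b' [O' [Hi2 [Hc2 [Hs2 Hprec]]]]]].
have HO : forall i, Om (O' i) by move=> i; case: (Hi2 i).
have [f' [Hc3 [Hs3 E]]] := surj_ex HOm HD HO Hc2 Hs2.
have Hf' : in_Bhat Om D0 f' by exists n', b', O'.
have -> : f = f' by apply: Inj => // x; rewrite E.
apply: (wb_core HD HO Hs3 HV Hs') => i x Ox.
exact: (Hprec i x Ox).
Qed.
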